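(* Let $F$ be a field of characteristic zero, $H$ an abelian group, and $A=\bigoplus_{h\in H}A_h$ an associative $H$-graded algebra whose $H$-grading is regular, with the function $\theta:H\times H\to F^*$ from the definition of regularity. Then $\theta$ is a skew-symmetric bicharacter and $A$ is $\theta$-commutative, i.e., $A$ is an $H$-graded color commutative superalgebra.
   Context: $H$ is written additively. An $H$-grading on $A$ is regular if (1) for every $n$ and every $(h_1,\dots,h_n)\in H^n$ there exist $a_i\in A_{h_i}$ with $a_1\cdots a_n\neq0$, and (2) for all $g,h\in H$ there exists $\theta(g,h)\in F^*$ such that $ab=\theta(g,h)ba$ for all $a\in A_g$, $b\in A_h$. A skew-symmetric bicharacter is a map $\beta:H\times H\to F^*$ with $\beta(g+h,k)=\beta(g,k)\beta(h,k)$, $\beta(g,h+k)=\beta(g,h)\beta(g,k)$, $\beta(g,h)=\beta(h,g)^{-1}$; $A$ is $\beta$-commutative (a color commutative superalgebra) if $ab=\beta(g,h)ba$ for all $a\in A_g$, $b\in A_h$. *)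

(* Defs.v *)
From mathcomp Require Import all_boot all_order all_algebra.
Set Implicit Arguments. Unset Strict Implicit. Unset Printing Implicit Defensive.
Import GRing.Theory.
Local Open Scope ring_scope.

Definition is_assoc_algebra (F : fieldType) (A : lmodType F) (mul : A -> A -> A) : Prop :=
  [/\ forall (k : F) (x y z : A), mul (k *: x + y) z = k *: mul x z + mul y z,
      forall (k : F) (x y z : A), mul x (k *: y + z) = k *: mul x y + mul x z
    & forall x y z : A, mul x (mul y z) = mul (mul x y) z].

Definition is_H_grading (F : fieldType) (A : lmodType F) (mul : A -> A -> A)
    (H : zmodType) (G : H -> {pred A}) : Prop :=
  [/\
      forall h, 0 \in G h /\ (forall (k : F) x y, x \in G h -> y \in G h -> k *: x + y \in G h),
      forall a : A, exists (s : seq H) (c : H -> A),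
        (forall h, c h \in G h) /\ a = \sum_(h <- s) c h,
      forall (s : seq H) (c : H -> A), uniq s -> (forall h, c h \in G h) ->
        \sum_(h <- s) c h = 0 -> forall h, h \in s -> c h = 0
    &
      forall g h a b, a \in G g -> b \in G h -> mul a b \in G (g + h)].

(* product a_0 a_1 ... a_n, left-associated (A is associative anyway) *)
Definition prod_list (A : Type) (mul : A -> A -> A) (a0 : A) (s : seq A) : A :=
  foldl mul a0 s.

Definition is_regular_grading (F : fieldType) (A : lmodType F) (mul : A -> A -> A)
    (H : zmodType) (G : H -> {pred A}) (theta : H -> H -> F) : Prop :=
  [/\
      forall (n : nat) (hs : 'I_n.+1 -> H), exists a : 'I_n.+1 -> A,
        (forall i, a i \in G (hs i)) /\
        prod_list mul (a ord0) [seq a (lift ord0 i) | i : 'I_n] != 0,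
      forall g h, theta g h != 0
    &
      forall g h a b, a \in G g -> b \in G h -> mul a b = theta g h *: mul b a].

Definition skew_symmetric_bicharacter (F : fieldType) (H : zmodType) (beta : H -> H -> F) : Prop :=
  [/\ forall g h, beta g h != 0,
      forall g h k, beta (g + h) k = beta g k * beta h k,
      forall g h k, beta g (h + k) = beta g h * beta g k
    & forall g h, beta g h = (beta h g)^-1].

Definition color_commutative (F : fieldType) (A : lmodType F) (mul : A -> A -> A)
    (H : zmodType) (G : H -> {pred A}) (beta : H -> H -> F) : Prop :=
  forall g h a b, a \in G g -> b \in G h -> mul a b = beta g h *: mul b a.

(* Main.v *)
Require Import Defs.
From mathcomp Require Import all_boot all_order all_algebra.
Local Open Scope ring_scope.
Import GRing.Theory.

Lemma scale_cancel (F : fieldType) (A : lmodType F) (p q : F) (x : A) :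
  x != 0 -> p *: x = q *: x -> p = q.
Proof.
move=> nx e; apply/eqP; rewrite -subr_eq0; apply/negPn/negP => npq.
have : (p - q)^-1 *: ((p - q) *: x) = x by rewrite scalerA mulVf // scale1r.
by rewrite scalerBl e subrr scaler0 => /esym/eqP; rewrite (negbTE nx).
Qed.

Theorem mainTheorem11 (F : fieldType) (A : lmodType F) (mul : A -> A -> A)
    (H : zmodType) (G : H -> {pred A}) (theta : H -> H -> F) :
  [pchar F] =i pred0 ->
  is_assoc_algebra mul ->
  is_H_grading mul G ->
  is_regular_grading mul G theta ->
  skew_symmetric_bicharacter theta /\ color_commutative mul G theta.
Proof.
move=> _ [linl linr assoc] [_ _ _ mulG] [reg nz comm].
have mulx0 x : mul x 0 = 0.
  have := linr 1 x 0 0; rewrite !scale1r addr0 => e.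
  by apply: (@addrI _ (mul x 0)); rewrite -e addr0.
have mulxZ k x y : mul x (k *: y) = k *: mul x y.
  by have := linr k x y 0; rewrite !addr0 mulx0 addr0.
have mul0x x : mul 0 x = 0.
  have := linl 1 0 0 x; rewrite !scale1r addr0 => e.
  by apply: (@addrI _ (mul 0 x)); rewrite -e addr0.
have mulZx k x y : mul (k *: x) y = k *: mul x y.
  by have := linl k x 0 y; rewrite !addr0 mul0x addr0.
have inv g h : theta g h * theta h g = 1.
  have [a [aG]] := reg 1%N (fun i : 'I_2 => nth g [:: g; h] i).
  rewrite /prod_list /image_mem enum_ordSl enum_ord0 /= => nab.
  have Ha := aG ord0; have Hb := aG (lift ord0 ord0); simpl in Ha, Hb.
  apply: (@scale_cancel F A _ _ _ nab); rewrite scale1r -scalerA -comm // -comm //.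
have bil g h k : theta (g + h) k = theta g k * theta h k.
  have [a [aG]] := reg 2%N (fun i : 'I_3 => nth g [:: g; h; k] i).
  rewrite /prod_list /image_mem !enum_ordSl enum_ord0 /= => nabc.
  have Ha := aG ord0; have Hb := aG (lift ord0 ord0);
  have Hc := aG (lift ord0 (lift ord0 ord0)); simpl in Ha, Hb, Hc.
  set x := a ord0 in nabc Ha *; set y := a (lift ord0 ord0) in nabc Hb *.
  set z := a (lift ord0 (lift ord0 ord0)) in nabc Hc *.
  have e1 : mul (mul x y) z = theta (g + h) k *: mul z (mul x y)
    by apply: comm => //; apply: mulG.
  have nz2 : mul z (mul x y) != 0.
    by apply: contra nabc; rewrite e1 => /eqP ->; rewrite scaler0.
  apply: (@scale_cancel F A _ _ _ nz2); rewrite -e1 -assoc (comm h k y z) // mulxZ.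
  rewrite assoc (comm g k x z) // mulZx scalerA -assoc mulrC //.
have ig a b : theta a b = (theta b a)^-1.
  by apply: (mulIf (nz b a)); rewrite mulVf // inv.
split; last exact: comm.
split=> // g h k.
by rewrite ig bil invfM -!ig.
Qed.
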